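(* Fix $n\ge1$ and real coefficients $a^{\pm}_{i,j},b^{\pm}_{i,j}$ ($i+j\le n$), with $p^{\pm}=\sum_{i+j=0}^n a^{\pm}_{i,j}x^iy^j$, $q^{\pm}=\sum_{i+j=0}^n b^{\pm}_{i,j}x^iy^j$. Then there exist real polynomials $\alpha(h),\beta(h),\gamma(h)$ with $\deg\alpha\le\left[\frac n2\right]$, $\deg\gamma\le\left[\frac n2\right]$, $\deg\beta\le\left[\frac n2\right]-1$, real polynomials $\Psi_{k,m}(h)$ ($2\le k\le n$, $0\le m\le 3[\frac k2]-3$) with $\deg\Psi_{k,m}\le\left[\frac k2\right]-1-\left[\frac{m+2}{3}\right]$, and a real polynomial $\Phi(u)$ of degree at most $3n+\frac{5+(-1)^n}{2}$, such that for all $h\in(0,+\infty)$ $$M(h)=\alpha(h)J_{0,0}(h)+\beta(h)J_{1,1}(h)+\gamma(h)J_{0,1}(h)+\sum_{k=2}^{n}\sum_{m=0}^{3[\frac k2]-3}\Psi_{k,m}(h)\,\sigma(h)^{7+2m}+\Phi(\sigma(h)).$$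
   Context: For $h>0$, $\sigma(h)$ denotes the unique positive solution $s$ of $s^2+s^6=h$; the circle $x^2+y^2=h$ meets $y=x^3$ exactly at $A_h=(-\sigma(h),-\sigma(h)^3)$ and $B_h=(\sigma(h),\sigma(h)^3)$. $L_h^+$ is the arc of the circle $x^2+y^2=h$ in $\{y\ge x^3\}$, oriented clockwise from $A_h$ to $B_h$; $L_h^-$ is the arc in $\{y\le x^3\}$, oriented clockwise from $B_h$ to $A_h$. $J_{i,j}(h)=\int_{L_h^+}x^iy^j\,dx$. The first order Melnikov function is $M(h)=\int_{L_h^+}(q^+dx-p^+dy)+\int_{L_h^-}(q^-dx-p^-dy)$. $[\cdot]$ denotes the integer part; a polynomial with negative degree bound is zero, and empty sums are zero. *)

(* Defs.v *)
From Stdlib Require Import Reals Lra Lia Psatz Classical ClassicalEpsilon ClassicalDescription.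
Open Scope R_scope.

Fixpoint psum (f : nat -> R) (N : nat) : R :=
  match N with
  | O => 0
  | S k => psum f k + f k
  end.

(* Evaluation of a univariate real polynomial with coefficients c and
   at most N coefficients (i.e. degree <= N-1; N = 0 means the zero polynomial). *)
Definition peval (c : nat -> R) (N : nat) (h : R) : R :=
  psum (fun i => c i * h ^ i) N.

Definition bpoly (a : nat -> nat -> R) (n : nat) (x y : R) : R :=
  psum (fun i => psum (fun j => a i j * x ^ i * y ^ j) (S (n - i))) (S n).

Definition sigma_h (h : R) : R :=
  epsilon (inhabits 0) (fun s => 0 < s /\ s ^ 2 + s ^ 6 = h).

(* Total (signed) Riemann integral: the Stdlib RiemannInt when f is
   Riemann integrable between a and b, and 0 otherwise. *)
Definition Rint (f : R -> R) (a b : R) : R :=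
  match excluded_middle_informative (inhabited (Riemann_integrable f a b)) with
  | left H =>
      RiemannInt
        (proj1_sig (constructive_indefinite_description (fun _ : Riemann_integrable f a b => True)
           (match H with inhabits pr => ex_intro _ pr I end)))
  | right _ => 0
  end.

Definition cx (h t : R) : R := sqrt h * cos t.
Definition cy (h t : R) : R := sqrt h * sin t.

(* Line integral  int P dx + Q dy  along the arc of the circle x^2+y^2=h
   traversed from angle t1 to angle t2 (t2 < t1 : clockwise). *)
Definition lint (P Q : R -> R -> R) (h t1 t2 : R) : R :=
  Rint (fun t => P (cx h t) (cy h t) * (- sqrt h * sin t)
               + Q (cx h t) (cy h t) * (sqrt h * cos t)) t1 t2.

(* Polar angle of B_h = (sigma_h h, sigma_h h ^3); A_h has angle theta0 h + PI. *)
Definition theta0 (h : R) : R := atan (sigma_h h ^ 2).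

(* L_h^+ : clockwise from A_h (angle theta0+PI) to B_h (angle theta0),
   through the top point (0, sqrt h), i.e. the arc in y >= x^3.
   L_h^- : clockwise from B_h (angle theta0) to A_h (angle theta0-PI),
   through the bottom point, i.e. the arc in y <= x^3. *)
Definition int_Lplus (P Q : R -> R -> R) (h : R) : R :=
  lint P Q h (theta0 h + PI) (theta0 h).
Definition int_Lminus (P Q : R -> R -> R) (h : R) : R :=
  lint P Q h (theta0 h) (theta0 h - PI).

Definition J (i j : nat) (h : R) : R :=
  int_Lplus (fun x y => x ^ i * y ^ j) (fun _ _ => 0) h.

Definition Melnikov (n : nat) (ap am bp bm : nat -> nat -> R) (h : R) : R :=
  int_Lplus (bpoly bp n) (fun x y => - bpoly ap n x y) h
  + int_Lminus (bpoly bm n) (fun x y => - bpoly am n x y) h.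

(* 3n + (5 + (-1)^n)/2 *)
Definition phi_deg (n : nat) : nat := (3 * n + (if Nat.even n then 3 else 2))%nat.

(* Main.v *)
Require Import Defs.
From Stdlib Require Import Reals Lra Lia Psatz FunctionalExtensionality ClassicalEpsilon.
From Coquelicot Require Import Coquelicot.
Open Scope R_scope.

Lemma psum_ext f g N : (forall k, (k < N)%nat -> f k = g k) -> psum f N = psum g N.
Proof. induction N; simpl; intros; auto. rewrite IHN by (intros; apply H; lia). rewrite H by lia. auto. Qed.

Lemma psum_plus f g N : psum f N + psum g N = psum (fun k => f k + g k) N.
Proof. induction N; simpl; [ring|]. rewrite <- IHN. ring. Qed.

Lemma psum_mul_r f K N : psum f N * K = psum (fun k => f k * K) N.
Proof. induction N; simpl; [ring|]. rewrite <- IHN. ring. Qed.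

Lemma psum_zero f N : (forall k, f k = 0) -> psum f N = 0.
Proof. intros H. induction N; simpl; auto. rewrite IHN, H. ring. Qed.

Lemma psum_shift f N : psum f (S N) = f O + psum (fun k => f (S k)) N.
Proof. induction N; simpl in *; [ring|]. rewrite IHN. ring. Qed.

Lemma psum_split f N M : psum f (N + M) = psum f N + psum (fun k => f (N + k)%nat) M.
Proof. induction M; simpl. rewrite Nat.add_0_r; ring. rewrite Nat.add_succ_r; simpl. rewrite IHM. ring. Qed.

Definition PolyDeg (D : nat) (f : R -> R) : Prop :=
  exists c : nat -> R, forall x, f x = peval c (S D) x.

Lemma PolyDeg_ext D f g : (forall x, f x = g x) -> PolyDeg D f -> PolyDeg D g.
Proof. intros E [c Hc]; exists c; intros; rewrite <- E; auto. Qed.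

Lemma PolyDeg_weak D D' f : (D <= D')%nat -> PolyDeg D f -> PolyDeg D' f.
Proof.
  intros Hle [c Hc]. exists (fun i => if Nat.leb i D then c i else 0).
  intros x. rewrite Hc. unfold peval.
  replace (S D') with (S D + (D' - D))%nat by lia. rewrite psum_split.
  match goal with |- _ = _ + psum ?g _ => rewrite (psum_zero g) end.
  - rewrite Rplus_0_r. apply psum_ext. intros k Hk.
    replace (Nat.leb k D) with true; auto. symmetry; apply Nat.leb_le; lia.
  - intros k. replace (Nat.leb (S D + k) D) with false. ring. symmetry; apply Nat.leb_gt; lia.
Qed.


Lemma PolyDeg_plus D f g : PolyDeg D f -> PolyDeg D g -> PolyDeg D (fun x => f x + g x).
Proof.
  intros [c Hc] [d Hd]. exists (fun i => c i + d i). intros x. rewrite Hc, Hd.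
  unfold peval. rewrite psum_plus. apply psum_ext; intros; ring.
Qed.

Lemma PolyDeg_scal D k f : PolyDeg D f -> PolyDeg D (fun x => k * f x).
Proof.
  intros [c Hc]. exists (fun i => k * c i). intros x. rewrite Hc.
  unfold peval. rewrite Rmult_comm, psum_mul_r. apply psum_ext; intros; ring.
Qed.

Lemma PolyDeg_const k : PolyDeg 0 (fun _ => k).
Proof. exists (fun _ => k). intros; unfold peval; simpl; ring. Qed.

Lemma PolyDeg_mulx D f : PolyDeg D f -> PolyDeg (S D) (fun x => x * f x).
Proof.
  intros [c Hc]. exists (fun i => match i with O => 0 | S j => c j end).
  intros x. rewrite Hc. unfold peval. rewrite (psum_shift _ (S D)).
  rewrite Rmult_comm, psum_mul_r. simpl (0 * _). rewrite Rmult_0_l, Rplus_0_l.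
  apply psum_ext; intros; simpl; ring.
Qed.

Lemma PolyDeg_mulpow D k f : PolyDeg D f -> PolyDeg (k + D) (fun x => x ^ k * f x).
Proof.
  intros H; induction k; simpl.
  - eapply PolyDeg_ext; [|exact H]; intros; simpl; ring.
  - eapply PolyDeg_ext; [|apply PolyDeg_mulx, IHk]; intros; simpl; ring.
Qed.

Lemma PolyDeg_pow D k c : (k <= D)%nat -> PolyDeg D (fun x => c * x ^ k).
Proof.
  intros Hk. apply (PolyDeg_weak (k + 0)); [lia|].
  eapply PolyDeg_ext; [|apply PolyDeg_mulpow, (PolyDeg_const c)]; intros; simpl; ring.
Qed.

Lemma PolyDeg_zero D : PolyDeg D (fun _ => 0).
Proof. eapply PolyDeg_ext; [|apply (PolyDeg_pow D 0 0); lia]; intros; simpl; ring. Qed.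

Lemma peval_zero N x : peval (fun _ => 0) N x = 0.
Proof. unfold peval. apply psum_zero; intros; ring. Qed.

Lemma sigma_spec h : 0 < h -> 0 < sigma_h h /\ sigma_h h ^ 2 + sigma_h h ^ 6 = h.
Proof.
  intros Hh. unfold sigma_h. apply epsilon_spec.
  destruct (IVT (fun s => s ^ 2 + s ^ 6 - h) 0 (h + 1)) as [z [Hz1 Hz2]].
  - intros x. reg.
  - lra.
  - simpl; lra.
  - assert (0 <= (h+1)^6) by (apply pow_le; lra). simpl in *; nra.
  - exists z. split; [|lra]. destruct Hz1 as [H0 _]. destruct H0 as [H0|H0]; auto.
    subst; simpl in Hz2; lra.
Qed.

Lemma theta0_cs h : 0 < h ->
  sqrt h * cos (theta0 h) = sigma_h h /\ sqrt h * sin (theta0 h) = sigma_h h ^ 3.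
Proof.
  intros Hh. destruct (sigma_spec h Hh) as [Hs Heq]. set (s := sigma_h h) in *.
  unfold theta0. fold s. rewrite cos_atan, sin_atan.
  assert (Hq : 0 < 1 + (s^2)²) by (unfold Rsqr; nra).
  assert (Hsq : sqrt h = s * sqrt (1 + (s^2)²)).
  { rewrite <- Heq. replace (s^2 + s^6) with (s * s * (1 + (s^2)²)) by (unfold Rsqr; ring).
    rewrite sqrt_mult_alt by nra. rewrite sqrt_square by lra. auto. }
  assert (0 < sqrt (1 + (s^2)²)) by (apply sqrt_lt_R0; lra).
  rewrite Hsq. split; field; lra.
Qed.

Lemma RInt_lin2 g1 g2 k1 k2 a b : ex_RInt g1 a b -> ex_RInt g2 a b ->
  RInt (fun t => k1 * g1 t + k2 * g2 t) a b = k1 * RInt g1 a b + k2 * RInt g2 a b.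
Proof.
  intros H1 H2. apply is_RInt_unique.
  apply (is_RInt_plus (fun t => k1 * g1 t) (fun t => k2 * g2 t)).
  - apply (is_RInt_scal g1). exact (RInt_correct _ _ _ H1).
  - apply (is_RInt_scal g2). exact (RInt_correct _ _ _ H2).
Qed.

Lemma cont_mon a b t : continuous (fun t => cos t ^ a * sin t ^ b) t.
Proof. apply (ex_derive_continuous (K:=R_AbsRing) (V:=R_NormedModule)). auto_derive. auto. Qed.

Lemma ex_mon a b x y : ex_RInt (fun t => cos t ^ a * sin t ^ b) x y.
Proof. apply (ex_RInt_continuous (V:=R_CompleteNormedModule)). intros; apply cont_mon. Qed.

Definition I (a b : nat) (th : R) : R := RInt (fun t => cos t ^ a * sin t ^ b) th (th + PI).

Lemma I_R1 a b th : I (S (S a)) b th + I a (S (S b)) th = I a b th.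
Proof.
  unfold I. rewrite <- (Rmult_1_l (RInt _ _ _)), <- (Rmult_1_l (RInt (fun t => _ ^ a * _ ^ (S (S b))) _ _)).
  rewrite <- RInt_lin2 by apply ex_mon. apply RInt_ext. intros t _.
  simpl. pose proof (sin2_cos2 t). unfold Rsqr in H.
  replace (cos t ^ a * sin t ^ b) with (cos t ^ a * sin t ^ b * (sin t * sin t + cos t * cos t)) by (rewrite H; ring).
  ring.
Qed.

Lemma I_R2 a b th : INR (S b) * I (S (S a)) b th - INR (S a) * I a (S (S b)) th
  = ((-1) ^ (a + b) - 1) * (cos th ^ (S a) * sin th ^ (S b)).
Proof.
  unfold I. unfold Rminus at 1. rewrite Ropp_mult_distr_l.
  rewrite <- RInt_lin2 by apply ex_mon.
  rewrite (RInt_ext _ (Derive (fun t => cos t ^ (S a) * sin t ^ (S b)))).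
  - rewrite RInt_Derive.
    + rewrite cos_plus, sin_plus, cos_PI, sin_PI.
      replace (cos th * -1 - sin th * 0) with ((-1) * cos th) by ring.
      replace (sin th * -1 + cos th * 0) with ((-1) * sin th) by ring.
      rewrite !Rpow_mult_distr. replace ((-1) ^ (a+b)) with ((-1)^a * (-1)^b) by (rewrite pow_add; ring).
      simpl. ring.
    + intros. auto_derive. auto.
    + intros. eapply continuous_ext.
      * intros t. symmetry. apply is_derive_unique. auto_derive; [auto|]. reflexivity.
      * apply (ex_derive_continuous (K:=R_AbsRing) (V:=R_NormedModule)). auto_derive. auto.
  - intros t _. symmetry. apply is_derive_unique. auto_derive; auto.
    change (match a with 0%nat => 1 | S _ => INR a + 1 end) with (INR (S a)).
    change (match b with 0%nat => 1 | S _ => INR b + 1 end) with (INR (S b)).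
    rewrite <- !tech_pow_Rmult. ring.
Qed.

Lemma RInt_by_deriv (F f : R -> R) a b :
  (forall t, is_derive F t (f t)) -> (forall t, continuous f t) -> F b - F a = RInt f a b.
Proof.
  intros HF Hc. symmetry. apply is_RInt_unique. apply (is_RInt_derive (V:=R_CompleteNormedModule)); intros; auto.
Qed.

Lemma I00 th : I 0 0 th = PI.
Proof.
  unfold I. rewrite <- (RInt_by_deriv (fun t => t)).
  - ring.
  - intros t. auto_derive; auto. simpl; ring.
  - intros; apply cont_mon.
Qed.

Lemma I10 th : I 1 0 th = - 2 * sin th.
Proof.
  unfold I. rewrite <- (RInt_by_deriv (fun t => sin t)).
  - rewrite sin_plus, cos_PI, sin_PI. ring.
  - intros t. auto_derive; auto. simpl; ring.
  - intros; apply cont_mon.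
Qed.

Lemma I01 th : I 0 1 th = 2 * cos th.
Proof.
  unfold I. rewrite <- (RInt_by_deriv (fun t => - cos t)).
  - rewrite cos_plus, cos_PI, sin_PI. ring.
  - intros t. auto_derive; auto. simpl; ring.
  - intros; apply cont_mon.
Qed.

Lemma I11 th : I 1 1 th = 0.
Proof.
  unfold I. rewrite <- (RInt_by_deriv (fun t => sin t ^ 2 / 2)).
  - rewrite sin_plus, cos_PI, sin_PI. field.
  - intros t. auto_derive; auto. simpl; field.
  - intros; apply cont_mon.
Qed.

Definition W (a b : nat) (h : R) : R := sqrt h ^ (a + b) * I a b (theta0 h).

Lemma W_step a b h : 0 < h ->
  let E := ((-1) ^ (a + b) - 1) * (sigma_h h ^ (S a) * (sigma_h h ^ 3) ^ (S b)) in
  W (S (S a)) b h = (INR (S a) * (h * W a b h) + E) / (INR (S a) + INR (S b)) /\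
  W a (S (S b)) h = (INR (S b) * (h * W a b h) - E) / (INR (S a) + INR (S b)).
Proof.
  intros Hh E. destruct (theta0_cs h Hh) as [Hc Hs].
  assert (Hsq : sqrt h ^ 2 = h) by (rewrite <- Rsqr_pow2; apply Rsqr_sqrt; lra).
  assert (Hp : forall k, sqrt h ^ (k + 2) = h * sqrt h ^ k) by (intros; rewrite pow_add, Hsq; ring).
  assert (H1 : W (S (S a)) b h + W a (S (S b)) h = h * W a b h).
  { unfold W. replace (S (S a) + b)%nat with (a + b + 2)%nat by lia.
    replace (a + S (S b))%nat with (a + b + 2)%nat by lia. rewrite Hp, <- (I_R1 a b). ring. }
  assert (H2 : INR (S b) * W (S (S a)) b h - INR (S a) * W a (S (S b)) h = E).
  { unfold W, E. replace (S (S a) + b)%nat with (a + b + 2)%nat by lia.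
    replace (a + S (S b))%nat with (a + b + 2)%nat by lia.
    replace (INR (S b) * (sqrt h ^ (a + b + 2) * I (S (S a)) b (theta0 h)) -
      INR (S a) * (sqrt h ^ (a + b + 2) * I a (S (S b)) (theta0 h))) with
      (sqrt h ^ (a + b + 2) * (INR (S b) * I (S (S a)) b (theta0 h) - INR (S a) * I a (S (S b)) (theta0 h))) by ring.
    rewrite I_R2, <- Hs, <- Hc. rewrite !Rpow_mult_distr.
    replace (a + b + 2)%nat with (S a + S b)%nat by lia. rewrite pow_add. ring. }
  assert (Hpos : 0 < INR (S a) + INR (S b)) by (pose proof (pos_INR a); pose proof (pos_INR b); rewrite !S_INR; lra).
  assert (K1 : (INR (S a) + INR (S b)) * W (S (S a)) b h = INR (S a) * (h * W a b h) + E)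
    by (rewrite <- H1, <- H2; ring).
  assert (K2 : (INR (S a) + INR (S b)) * W a (S (S b)) h = INR (S b) * (h * W a b h) - E)
    by (rewrite <- H1, <- H2; ring).
  split; [rewrite <- K1 | rewrite <- K2]; field; lra.
Qed.

Lemma PolyDeg_step D D' f k1 k2 e : (D + 6 <= D')%nat -> (e <= D')%nat -> PolyDeg D f ->
  PolyDeg D' (fun x => k1 * ((x ^ 2 + x ^ 6) * f x) + k2 * x ^ e).
Proof.
  intros H1 H2 Hf. apply PolyDeg_plus; [|apply PolyDeg_pow; auto].
  eapply PolyDeg_ext; [|apply (PolyDeg_scal _ k1), PolyDeg_plus;
    [apply (PolyDeg_weak (2 + D)); [lia|apply PolyDeg_mulpow, Hf]
    |apply (PolyDeg_weak (6 + D)); [lia|apply PolyDeg_mulpow, Hf]]].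
  intros; simpl; ring.
Qed.

Lemma W_even m : forall a b, (a + b = 2 * m)%nat ->
  exists c, forall h, 0 < h -> W a b h = c * PI * h ^ m.
Proof.
  induction m as [|m IH]; intros a b Hab.
  - assert (a = 0%nat /\ b = 0%nat) as [-> ->] by lia. exists 1. intros h Hh.
    unfold W. rewrite I00. simpl; ring.
  - destruct a as [|[|a]].
    + destruct b as [|[|b]]; try lia.
      destruct (IH 0%nat b ltac:(lia)) as [c Hc].
      exists (INR (S b) * c / (INR 1 + INR (S b))). intros h Hh.
      destruct (W_step 0 b h Hh) as [_ HW]. rewrite HW, Hc by auto.
      replace (0 + b)%nat with (2 * m)%nat by lia. rewrite pow_1_even.
      assert (0 < INR 1 + INR (S b)) by (rewrite <- plus_INR; apply lt_0_INR; lia).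
      rewrite <- !tech_pow_Rmult. field. lra.
    + destruct b as [|[|b]]; try lia.
      * exists 0. intros h Hh. unfold W. rewrite I11. ring.
      * destruct (IH 1%nat b ltac:(lia)) as [c Hc].
        exists (INR (S b) * c / (INR 2 + INR (S b))). intros h Hh.
        destruct (W_step 1 b h Hh) as [_ HW]. rewrite HW, Hc by auto.
        replace (1 + b)%nat with (2 * m)%nat by lia. rewrite pow_1_even.
        assert (0 < INR 2 + INR (S b)) by (rewrite <- plus_INR; apply lt_0_INR; lia).
        rewrite <- !tech_pow_Rmult. field. lra.
    + destruct (IH a b ltac:(lia)) as [c Hc].
      exists (INR (S a) * c / (INR (S a) + INR (S b))). intros h Hh.
      destruct (W_step a b h Hh) as [HW _]. rewrite HW, Hc by auto.
      replace (a + b)%nat with (2 * m)%nat by lia. rewrite pow_1_even.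
      assert (0 < INR (S a) + INR (S b)) by (pose proof (pos_INR a); pose proof (pos_INR b); rewrite !S_INR; lra).
      rewrite <- !tech_pow_Rmult. field. lra.
Qed.

Lemma W_odd m : forall a b, (a + b = 2 * m + 1)%nat ->
  exists f, PolyDeg (3 * (a + b)) f /\ forall h, 0 < h -> W a b h = f (sigma_h h).
Proof.
  induction m as [|m IH]; intros a b Hab.
  - destruct a as [|[|a]]; destruct b as [|[|b]]; try lia.
    + exists (fun x => 2 * x ^ 1). split; [apply PolyDeg_pow; lia|].
      intros h Hh. unfold W. rewrite I01. destruct (theta0_cs h Hh) as [Hc _].
      rewrite <- Hc. simpl; ring.
    + exists (fun x => -2 * x ^ 3). split; [apply PolyDeg_pow; lia|].
      intros h Hh. unfold W. rewrite I10. destruct (theta0_cs h Hh) as [_ Hs].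
      rewrite <- Hs. simpl; ring.
  - assert (Hcase : (2 <= a)%nat \/ (2 <= b)%nat) by lia.
    destruct Hcase as [Ha|Hb].
    + destruct a as [|[|a]]; try lia.
      destruct (IH a b ltac:(lia)) as [f [Hf Hfe]].
      set (den := INR (S a) + INR (S b)).
      assert (Hden : 0 < den) by (unfold den; pose proof (pos_INR a); pose proof (pos_INR b); rewrite !S_INR; lra).
      exists (fun x => (INR (S a) / den) * ((x ^ 2 + x ^ 6) * f x) + (-2 / den) * x ^ (S a + 3 * S b)).
      split; [apply PolyDeg_step with (D := (3 * (a + b))%nat); auto; lia|].
      intros h Hh. destruct (W_step a b h Hh) as [HW _]. rewrite HW, Hfe by auto.
      destruct (sigma_spec h Hh) as [_ Hsig].
      replace (a + b)%nat with (S (2 * m)) by lia. rewrite pow_1_odd.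
      rewrite <- pow_mult, <- pow_add. rewrite <- Hsig at 1. fold den. field. lra.
    + destruct b as [|[|b]]; try lia.
      destruct (IH a b ltac:(lia)) as [f [Hf Hfe]].
      set (den := INR (S a) + INR (S b)).
      assert (Hden : 0 < den) by (unfold den; pose proof (pos_INR a); pose proof (pos_INR b); rewrite !S_INR; lra).
      exists (fun x => (INR (S b) / den) * ((x ^ 2 + x ^ 6) * f x) + (2 / den) * x ^ (S a + 3 * S b)).
      split; [apply PolyDeg_step with (D := (3 * (a + b))%nat); auto; lia|].
      intros h Hh. destruct (W_step a b h Hh) as [_ HW]. rewrite HW, Hfe by auto.
      destruct (sigma_spec h Hh) as [_ Hsig].
      replace (a + b)%nat with (S (2 * m)) by lia. rewrite pow_1_odd.
      rewrite <- pow_mult, <- pow_add. rewrite <- Hsig at 1. fold den. field. lra.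
Qed.

Definition Cn (n : nat) (G : R -> R) : Prop :=
  exists g f, PolyDeg (n / 2) g /\ PolyDeg (phi_deg n) f /\
    forall h, 0 < h -> G h = PI * h * g h + f (sigma_h h).

Lemma Cn_ext n G G' : (forall h, 0 < h -> G h = G' h) -> Cn n G -> Cn n G'.
Proof. intros E (g & f & Hg & Hf & HG). exists g, f. repeat split; auto. intros; rewrite <- E; auto. Qed.

Lemma Cn_plus n G1 G2 : Cn n G1 -> Cn n G2 -> Cn n (fun h => G1 h + G2 h).
Proof.
  intros (g1 & f1 & Hg1 & Hf1 & H1) (g2 & f2 & Hg2 & Hf2 & H2).
  exists (fun x => g1 x + g2 x), (fun x => f1 x + f2 x).
  repeat split; try (apply PolyDeg_plus; auto). intros h Hh. rewrite H1, H2 by auto. ring.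
Qed.

Lemma Cn_scal n k G : Cn n G -> Cn n (fun h => k * G h).
Proof.
  intros (g & f & Hg & Hf & H).
  exists (fun x => k * g x), (fun x => k * f x).
  repeat split; try (apply PolyDeg_scal; auto). intros h Hh. rewrite H by auto. ring.
Qed.

Lemma half_bound n m : (2 * m <= n + 1)%nat -> (m - 1 <= n / 2)%nat.
Proof.
  intros H. pose proof (Nat.div_mod n 2 ltac:(lia)). pose proof (Nat.mod_upper_bound n 2 ltac:(lia)). lia.
Qed.

Lemma phi_bound n m : (2 * m + 1 <= n + 1)%nat -> (3 * (2 * m + 1) <= phi_deg n)%nat.
Proof.
  intros H. unfold phi_deg. destruct (Nat.even n) eqn:E; [lia|].
  assert (Hodd : Nat.odd n = true) by (rewrite <- Nat.negb_even, E; auto).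
  apply Nat.odd_spec in Hodd. destruct Hodd as [k ->]. lia.
Qed.

Lemma Cn_W n a b : (1 <= a + b <= n + 1)%nat -> Cn n (W a b).
Proof.
  intros Hab. destruct (Nat.Even_or_Odd (a + b)) as [[m Hm]|[m Hm]].
  - destruct (W_even m a b Hm) as [c Hc].
    exists (fun x => c * x ^ (m - 1)), (fun _ => 0). repeat split.
    + apply PolyDeg_pow, half_bound; lia.
    + apply PolyDeg_zero.
    + intros h Hh. rewrite Hc by auto. replace m with (S (m - 1)) at 1 by lia. simpl. ring.
  - destruct (W_odd m a b Hm) as [f [Hf Hfe]].
    exists (fun _ => 0), f. repeat split.
    + apply PolyDeg_zero.
    + eapply PolyDeg_weak; [|exact Hf]. rewrite Hm. apply phi_bound. lia.
    + intros h Hh. rewrite Hfe by auto. ring.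
Qed.

Lemma RInt_scal1 f k a b : ex_RInt f a b -> RInt (fun t => k * f t) a b = k * RInt f a b.
Proof.
  intros H. apply is_RInt_unique. apply (is_RInt_scal (V:=R_NormedModule) f). exact (RInt_correct _ _ _ H).
Qed.

Lemma RInt_plus1 f g a b : ex_RInt f a b -> ex_RInt g a b ->
  RInt (fun t => f t + g t) a b = RInt f a b + RInt g a b.
Proof.
  intros H1 H2. apply is_RInt_unique.
  apply (is_RInt_plus (V:=R_NormedModule) f g); [exact (RInt_correct _ _ _ H1)|exact (RInt_correct _ _ _ H2)].
Qed.

Lemma ex_cont (f : R -> R) a b : (forall t, continuous f t) -> ex_RInt f a b.
Proof. intros H. apply (ex_RInt_continuous (V:=R_CompleteNormedModule)). intros; auto. Qed.

Lemma I_minus a b th :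
  RInt (fun t => cos t ^ a * sin t ^ b) (th - PI) th = (-1) ^ (a + b) * I a b th.
Proof.
  unfold I. rewrite <- RInt_scal1 by apply ex_mon.
  transitivity (RInt (fun t => cos t ^ a * sin t ^ b) (1 * th + - PI) (1 * (th + PI) + - PI)).
  { f_equal; ring. }
  rewrite <- (RInt_comp_lin (V:=R_CompleteNormedModule)) by apply ex_mon.
  apply RInt_ext. intros t _. change (scal 1 ?x) with (1 * x).
  replace (1 * t + - PI) with (- (PI - t)) by ring.
  rewrite cos_neg, sin_neg, cos_minus, sin_minus, cos_PI, sin_PI.
  replace (-1 * cos t + 0 * sin t) with (-1 * cos t) by ring.
  replace (0 * cos t - -1 * sin t) with (sin t) by ring.
  replace (- sin t) with (-1 * sin t) by ring.
  match goal with |- ?x = ?y => change (@eq R x y) end. rewrite !Rpow_mult_distr, pow_add. ring.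
Qed.

Definition Good (n : nat) (g : R -> R -> R) : Prop :=
  (forall h t, continuous (g h) t) /\
  Cn n (fun h => RInt (g h) (theta0 h) (theta0 h + PI)) /\
  Cn n (fun h => RInt (g h) (theta0 h - PI) (theta0 h)).

Lemma Good_ext n g g' : (forall h t, g h t = g' h t) -> Good n g -> Good n g'.
Proof.
  intros E H. replace g' with g; auto.
  apply functional_extensionality; intros h; apply functional_extensionality; intros t; auto.
Qed.

Lemma Good_plus n g1 g2 : Good n g1 -> Good n g2 -> Good n (fun h t => g1 h t + g2 h t).
Proof.
  intros (C1 & P1 & M1) (C2 & P2 & M2). split; [|split].
  - intros h t. apply (continuous_plus (g1 h) (g2 h)); auto.
  - eapply Cn_ext; [|apply (Cn_plus _ _ _ P1 P2)]. intros h _. simpl.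
    rewrite RInt_plus1; auto; apply ex_cont; auto.
  - eapply Cn_ext; [|apply (Cn_plus _ _ _ M1 M2)]. intros h _. simpl.
    rewrite RInt_plus1; auto; apply ex_cont; auto.
Qed.

Lemma Good_mon n c a b : (1 <= a + b <= n + 1)%nat ->
  Good n (fun h t => c * sqrt h ^ (a + b) * (cos t ^ a * sin t ^ b)).
Proof.
  intros Hab. split; [|split].
  - intros h t. apply (ex_derive_continuous (K:=R_AbsRing) (V:=R_NormedModule)). auto_derive. auto.
  - eapply Cn_ext; [|apply (Cn_scal _ c), (Cn_W n a b Hab)]. intros h _. simpl.
    rewrite RInt_scal1 by apply ex_mon. unfold W, I. ring.
  - eapply Cn_ext; [|apply (Cn_scal _ (c * (-1) ^ (a + b))), (Cn_W n a b Hab)]. intros h _. simpl.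
    rewrite RInt_scal1 by apply ex_mon. rewrite I_minus. unfold W. ring.
Qed.

Lemma Good_psum n N (g : nat -> R -> R -> R) :
  (forall k, (k < N)%nat -> Good n (g k)) -> Good n (fun h t => psum (fun k => g k h t) N).
Proof.
  induction N; intros H; simpl.
  - apply (Good_ext n (fun h t => 0 * sqrt h ^ (1 + 0) * (cos t ^ 1 * sin t ^ 0))).
    + intros; ring.
    + apply Good_mon; lia.
  - apply (Good_plus n (fun h t => psum (fun k => g k h t) N) (g N)).
    + apply IHN; intros; apply H; lia.
    + apply H; lia.
Qed.

Ltac toR := match goal with |- ?x = ?y => change (@eq R x y) end.

Lemma Rint_RInt (f : R -> R) a b : (forall t, continuous f t) -> Rint f a b = RInt f a b.
Proof.
  intros Hc. unfold Rint. destruct (ClassicalDescription.excluded_middle_informative _) as [H|H].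
  - symmetry. apply RInt_Reals.
  - exfalso. apply H. constructor. apply ex_RInt_Reals_0. apply ex_cont; auto.
Qed.

Lemma RInt_swap1 (f : R -> R) a b : (forall t, continuous f t) -> RInt f b a = - RInt f a b.
Proof. intros Hc. rewrite <- (opp_RInt_swap (V:=R_CompleteNormedModule)); [reflexivity|apply ex_cont; auto]. Qed.

Definition integrand (P Q : R -> R -> R) (h t : R) : R :=
  P (cx h t) (cy h t) * (- sqrt h * sin t) + Q (cx h t) (cy h t) * (sqrt h * cos t).

Lemma bpoly_expand A B n h t :
  integrand (bpoly A n) (fun x y => - bpoly B n x y) h t =
  psum (fun i => psum (fun j =>
     (- A i j) * sqrt h ^ (i + S j) * (cos t ^ i * sin t ^ S j)
     + (- B i j) * sqrt h ^ (S i + j) * (cos t ^ S i * sin t ^ j)) (S (n - i))) (S n).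
Proof.
  unfold integrand, bpoly, cx, cy.
  replace (- psum _ (S n) * (sqrt h * cos t)) with
    (psum (fun i => psum (fun j => B i j * (sqrt h * cos t) ^ i * (sqrt h * sin t) ^ j) (S (n - i))) (S n) * (- (sqrt h * cos t))) by ring.
  rewrite !psum_mul_r, psum_plus. apply psum_ext. intros i _.
  rewrite !psum_mul_r, psum_plus. apply psum_ext. intros j _.
  rewrite !Rpow_mult_distr, !pow_add. rewrite <- !tech_pow_Rmult. ring.
Qed.

Lemma Good_integrand n A B : Good n (integrand (bpoly A n) (fun x y => - bpoly B n x y)).
Proof.
  eapply Good_ext; [intros h t; symmetry; apply bpoly_expand|].
  apply (Good_psum n (S n) (fun i h t => psum (fun j => _) (S (n - i)))).
  intros i Hi.
  apply (Good_psum n (S (n - i)) (fun j h t => _ + _)).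
  intros j Hj. apply (Good_plus n (fun h t => _) (fun h t => _)); apply Good_mon; lia.
Qed.

Lemma J01_val h : 0 < h -> J 0 1 h = PI * h / 2.
Proof.
  intros Hh. unfold J, int_Lplus, lint.
  rewrite Rint_RInt.
  2:{ intros t. apply (ex_derive_continuous (K:=R_AbsRing) (V:=R_NormedModule)). unfold cx, cy. auto_derive. auto. }
  rewrite RInt_swap1.
  2:{ intros t. apply (ex_derive_continuous (K:=R_AbsRing) (V:=R_NormedModule)). unfold cx, cy. auto_derive. auto. }
  rewrite (RInt_ext _ (fun t => (-1) * (cos t ^ 0 * sin t ^ 2 * sqrt h ^ (0 + 2)))).
  2:{ intros t _. toR. unfold cx, cy. simpl. ring. }
  rewrite RInt_scal1. 2:{ apply ex_cont. intros t. apply (ex_derive_continuous (K:=R_AbsRing) (V:=R_NormedModule)). auto_derive. auto. }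
  rewrite (RInt_ext _ (fun t => sqrt h ^ (0 + 2) * (cos t ^ 0 * sin t ^ 2))) by (intros; toR; ring).
  rewrite RInt_scal1 by apply ex_mon.
  change (sqrt h ^ (0 + 2) * RInt (fun t => cos t ^ 0 * sin t ^ 2) (theta0 h) (theta0 h + PI)) with (W 0 2 h).
  destruct (W_step 0 0 h Hh) as [_ HW]. rewrite HW.
  unfold W at 1. rewrite I00. simpl (0+0)%nat. simpl pow. change (INR 1) with 1. field.
Qed.

Lemma peval_scal c k N x : peval (fun i => k * c i) N x = k * peval c N x.
Proof. unfold peval. rewrite Rmult_comm, psum_mul_r. apply psum_ext; intros; ring. Qed.

Lemma Lplus_eq P Q h : int_Lplus P Q h = Rint (integrand P Q h) (theta0 h + PI) (theta0 h).
Proof. reflexivity. Qed.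
Lemma Lminus_eq P Q h : int_Lminus P Q h = Rint (integrand P Q h) (theta0 h) (theta0 h - PI).
Proof. reflexivity. Qed.

Theorem lemma3p3 (n : nat) (Hn : (1 <= n)%nat) (ap am bp bm : nat -> nat -> R) :
  exists (alpha beta gamma : nat -> R) (Psi : nat -> nat -> nat -> R) (Phi : nat -> R),
    forall h : R, 0 < h ->
      Melnikov n ap am bp bm h =
        peval alpha (S (n / 2)%nat) h * J 0 0 h
        + peval beta (n / 2)%nat h * J 1 1 h
        + peval gamma (S (n / 2)%nat) h * J 0 1 h
        + psum (fun k =>
                  if Nat.leb 2 k then
                    psum (fun m =>
                            peval (Psi k m) (k / 2 - (m + 2) / 3)%nat h
                            * sigma_h h ^ (7 + 2 * m)%nat)
                         (3 * (k / 2) - 2)%nat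
                  else 0) (S n)
        + peval Phi (S (phi_deg n)) (sigma_h h).
Proof.
  destruct (Good_integrand n bp ap) as (Cp & Pp & _).
  destruct (Good_integrand n bm am) as (Cm & _ & Mm).
  assert (HC : Cn n (Melnikov n ap am bp bm)).
  { eapply Cn_ext; [|apply Cn_plus; [apply (Cn_scal n (-1)), Pp | apply (Cn_scal n (-1)), Mm]].
    intros h Hh. cbv beta. unfold Melnikov. rewrite Lplus_eq, Lminus_eq.
    rewrite (Rint_RInt _ _ _ (Cp h)), (Rint_RInt _ _ _ (Cm h)), (RInt_swap1 _ _ _ (Cp h)), (RInt_swap1 _ _ _ (Cm h)). ring. }
  destruct HC as (g & f & [cg Hg] & [cf Hf] & HM).
  exists (fun _ => 0), (fun _ => 0), (fun i => 2 * cg i), (fun _ _ _ => 0), cf.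
  intros h Hh. rewrite HM by auto. rewrite !peval_zero. rewrite peval_scal. rewrite (J01_val h Hh). rewrite <- Hg, <- Hf.
  rewrite (psum_zero _ (S n)); [field|].
  intros k. destruct (Nat.leb 2 k); auto. apply psum_zero. intros; rewrite peval_zero; ring.
Qed.
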